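(* If a nondegenerate triangle is circumscribed about a hyperbola one of whose foci coincides with the circumcenter of the triangle, then the eccentricity $e$ of the hyperbola satisfies $1<e<3$.
   Context: A triangle is circumscribed about a conic if each of its three sidelines is tangent to the conic. The eccentricity of a hyperbola is $e=c/a$ where $c$ is half the distance between the foci and $a$ is the semi-transverse axis. *)

(* Defs.v *)
From HB Require Import structures.
From mathcomp Require Import all_boot all_order all_algebra.
Set Implicit Arguments. Unset Strict Implicit. Unset Printing Implicit Defensive.
Import Order.TTheory GRing.Theory Num.Theory.
Local Open Scope ring_scope.

Section Plane.
Variable R : rcfType.
Definition pt := (R * R)%type.

Definition psub (p q : pt) : pt := (p.1 - q.1, p.2 - q.2).
Definition padd (p q : pt) : pt := (p.1 + q.1, p.2 + q.2).
Definition pscale (k : R) (p : pt) : pt := (k * p.1, k * p.2).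
Definition dot (p q : pt) : R := p.1 * q.1 + p.2 * q.2.
Definition cross (p q : pt) : R := p.1 * q.2 - p.2 * q.1.
Definition perp (p : pt) : pt := (- p.2, p.1).
Definition dist2 (p q : pt) : R := dot (psub p q) (psub p q).

Definition nondeg_triangle (A B C : pt) : Prop := cross (psub B A) (psub C A) != 0.

Definition is_circumcenter (P A B C : pt) : Prop :=
  dist2 P A = dist2 P B /\ dist2 P B = dist2 P C.

(* The hyperbola with center O, (unit) transverse-axis direction u,
   semi-transverse axis a > 0 and semi-conjugate axis b > 0 is the zero set of
     Q(P) = ((P-O).u)^2/a^2 - ((P-O).u^perp)^2/b^2 - 1,
   i.e. x^2/a^2 - y^2/b^2 = 1 in the frame (O; u, u^perp). *)
Definition hypQ (O u : pt) (a b : R) (P : pt) : R :=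
  (dot (psub P O) u) ^+ 2 / a ^+ 2 - (dot (psub P O) (perp u)) ^+ 2 / b ^+ 2 - 1.

Definition hyp_c (a b : R) : R := Num.sqrt (a ^+ 2 + b ^+ 2).
Definition focus1 (O u : pt) (a b : R) : pt := padd O (pscale (hyp_c a b) u).
Definition focus2 (O u : pt) (a b : R) : pt := psub O (pscale (hyp_c a b) u).
Definition eccentricity (a b : R) : R := hyp_c a b / a.

(* The line through X and Y (X <> Y) is tangent to the hyperbola iff the
   restriction t |-> Q(X + t (Y - X)) = qa t^2 + qb t + qc is a genuine
   quadratic (qa <> 0) with a double root (qb^2 = 4 qa qc). *)
Definition tangent_line (O u : pt) (a b : R) (X Y : pt) : Prop :=
  let d := psub Y X in
  let w := psub X O in
  let v := perp u in
  let qa := (dot d u) ^+ 2 / a ^+ 2 - (dot d v) ^+ 2 / b ^+ 2 in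
  let qb := 2 * ((dot w u) * (dot d u) / a ^+ 2 - (dot w v) * (dot d v) / b ^+ 2) in
  let qc := (dot w u) ^+ 2 / a ^+ 2 - (dot w v) ^+ 2 / b ^+ 2 - 1 in
  qa != 0 /\ qb ^+ 2 = 4 * qa * qc.
End Plane.

(* Main.v *)
Require Import Defs.
From HB Require Import structures.
From mathcomp Require Import all_boot all_order all_algebra.
From mathcomp Require Import ring lra.
Import Order.TTheory GRing.Theory Num.Theory.
Set Implicit Arguments. Unset Strict Implicit.
Local Open Scope ring_scope.

Lemma pedal (R : rcfType) (a b f p q p' q' : R) :
  f ^+ 2 = a ^+ 2 + b ^+ 2 ->
  (p - f) ^+ 2 + q ^+ 2 = (p' - f) ^+ 2 + q' ^+ 2 ->
  (- (q' - q) * p + (p' - p) * q) ^+ 2 = a ^+ 2 * (q' - q) ^+ 2 - b ^+ 2 * (p' - p) ^+ 2 ->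
  (p' - p) ^+ 2 + (q' - q) ^+ 2 != 0 ->
  ((p + p') / 2) ^+ 2 + ((q + q') / 2) ^+ 2 = a ^+ 2.
Proof.
move=> hf he ht hd.
have two_neq0 : (2:R) != 0 by rewrite pnatr_eq0.
set d1 := p' - p; set d2 := q' - q.
set E1 := d1 * ((p + p') / 2 - f) + d2 * ((q + q') / 2).
have E10 : E1 = 0.
  have -> : E1 = ((p' - f) ^+ 2 + q' ^+ 2 - ((p - f) ^+ 2 + q ^+ 2)) / 2.
    by rewrite /E1 /d1 /d2; field.
  by rewrite he subrr mul0r.
have key : (d1 ^+ 2 + d2 ^+ 2) * (((p + p') / 2) ^+ 2 + ((q + q') / 2) ^+ 2 - a ^+ 2)
   = E1 * (2 * d1 * f + E1) + (((- d2 * p + d1 * q) ^+ 2) - (a ^+ 2 * d2 ^+ 2 - b ^+ 2 * d1 ^+ 2))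
     + d1 ^+ 2 * (f ^+ 2 - a ^+ 2 - b ^+ 2).
  by rewrite /E1 /d1 /d2; field.
move: key; rewrite E10 mul0r add0r hf /d1 /d2 ht subrr add0r.
rewrite (_ : a ^+ 2 + b ^+ 2 - a ^+ 2 - b ^+ 2 = 0); last by ring.
rewrite mulr0 => /eqP; rewrite mulf_eq0 (negbTE hd) /= subr_eq0 => /eqP //.
Qed.

Lemma core (R : rcfType) (a f x1 y1 x2 y2 x3 y3 : R) :
  (x2 - x1) * (y3 - y1) - (y2 - y1) * (x3 - x1) != 0 ->
  ((x1 + x2) / 2) ^+ 2 + ((y1 + y2) / 2) ^+ 2 = a ^+ 2 ->
  ((x2 + x3) / 2) ^+ 2 + ((y2 + y3) / 2) ^+ 2 = a ^+ 2 ->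
  ((x3 + x1) / 2) ^+ 2 + ((y3 + y1) / 2) ^+ 2 = a ^+ 2 ->
  (x1 - f) ^+ 2 + y1 ^+ 2 = (x2 - f) ^+ 2 + y2 ^+ 2 ->
  (x2 - f) ^+ 2 + y2 ^+ 2 = (x3 - f) ^+ 2 + y3 ^+ 2 ->
  f ^+ 2 < 9 * a ^+ 2.
Proof.
move=> hc m12 m23 m31 e12 e23.
set vx := x1 + x2 + x3 - f; set vy := y1 + y2 + y3.
have D13 : (x1 - x3) * vx + (y1 - y3) * vy = 0.
  have -> : (x1 - x3) * vx + (y1 - y3) * vy =
    2 * ((((x1 + x2) / 2) ^+ 2 + ((y1 + y2) / 2) ^+ 2) - (((x2 + x3) / 2) ^+ 2 + ((y2 + y3) / 2) ^+ 2))
    + (((x1 - f) ^+ 2 + y1 ^+ 2) - ((x3 - f) ^+ 2 + y3 ^+ 2)) / 2.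
    by rewrite /vx /vy; field.
  by rewrite m12 m23 e12 e23 !subrr mul0r mulr0 addr0.
have D23 : (x2 - x3) * vx + (y2 - y3) * vy = 0.
  have -> : (x2 - x3) * vx + (y2 - y3) * vy =
    2 * ((((x1 + x2) / 2) ^+ 2 + ((y1 + y2) / 2) ^+ 2) - (((x3 + x1) / 2) ^+ 2 + ((y3 + y1) / 2) ^+ 2))
    + (((x2 - f) ^+ 2 + y2 ^+ 2) - ((x3 - f) ^+ 2 + y3 ^+ 2)) / 2.
    by rewrite /vx /vy; field.
  by rewrite m12 m31 e23 !subrr mul0r mulr0 addr0.
have hvx : vx = 0.
  have : ((x2 - x1) * (y3 - y1) - (y2 - y1) * (x3 - x1)) * vx = 0.
    have -> : ((x2 - x1) * (y3 - y1) - (y2 - y1) * (x3 - x1)) * vx =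
      (y2 - y3) * ((x1 - x3) * vx + (y1 - y3) * vy) - (y1 - y3) * ((x2 - x3) * vx + (y2 - y3) * vy) by ring.
    by rewrite D13 D23 !mulr0 subrr.
  by move/eqP; rewrite mulf_eq0 (negbTE hc) => /eqP.
have hvy : vy = 0.
  have : ((x2 - x1) * (y3 - y1) - (y2 - y1) * (x3 - x1)) * vy = 0.
    have -> : ((x2 - x1) * (y3 - y1) - (y2 - y1) * (x3 - x1)) * vy =
      (x1 - x3) * ((x2 - x3) * vx + (y2 - y3) * vy) - (x2 - x3) * ((x1 - x3) * vx + (y1 - y3) * vy) by ring.
    by rewrite D13 D23 !mulr0 subrr.
  by move/eqP; rewrite mulf_eq0 (negbTE hc) => /eqP.
have ex3 : x3 = f - x1 - x2.
  by rewrite -[x3]subr0 -hvx /vx; ring.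
have ey3 : y3 = - y1 - y2 by rewrite -[y3]subr0 -hvy /vy; ring.
have hpos : 0 < (x1 - x2) ^+ 2 + (y1 - y2) ^+ 2.
  rewrite lt_def addr_ge0 ?sqr_ge0 // andbT.
  apply/negP => /eqP /eqP; rewrite paddr_eq0 ?sqr_ge0 // !sqrf_eq0 !subr_eq0 => /andP [/eqP ex /eqP ey].
  by move: hc; rewrite ex ey !subrr !mul0r subrr eqxx.
move: m12 e12 e23 hpos; rewrite ex3 ey3 => m12 e12 e23 hpos.
set X3 := f - x1 - x2; set Y3 := - y1 - y2.
have id1 : 4 * f ^+ 2 = 3 * (((x1 - f) ^+ 2 + y1 ^+ 2) + ((x2 - f) ^+ 2 + y2 ^+ 2) + ((X3 - f) ^+ 2 + Y3 ^+ 2))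
   - (((x1 - x2) ^+ 2 + (y1 - y2) ^+ 2) + ((x2 - X3) ^+ 2 + (y2 - Y3) ^+ 2) + ((X3 - x1) ^+ 2 + (Y3 - y1) ^+ 2)).
  by rewrite /X3 /Y3; ring.
have id2 : (X3 - f) ^+ 2 + Y3 ^+ 2 = 4 * (((x1 + x2) / 2) ^+ 2 + ((y1 + y2) / 2) ^+ 2).
  by rewrite /X3 /Y3; field.
rewrite m12 in id2.
have h1 := sqr_ge0 (x2 - X3); have h2 := sqr_ge0 (y2 - Y3).
have h3 := sqr_ge0 (X3 - x1); have h4 := sqr_ge0 (Y3 - y1).
lra.
Qed.

Lemma tl_alg (R : rcfType) (a b p q d1 d2 : R) : 0 < a -> 0 < b ->
  d1 ^+ 2 / a ^+ 2 - d2 ^+ 2 / b ^+ 2 != 0 ->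
  (2 * (p * d1 / a ^+ 2 - q * d2 / b ^+ 2)) ^+ 2 =
    4 * (d1 ^+ 2 / a ^+ 2 - d2 ^+ 2 / b ^+ 2) * (p ^+ 2 / a ^+ 2 - q ^+ 2 / b ^+ 2 - 1) ->
  (- d2 * p + d1 * q) ^+ 2 = a ^+ 2 * d2 ^+ 2 - b ^+ 2 * d1 ^+ 2 /\
  d1 ^+ 2 + d2 ^+ 2 != 0.
Proof.
move=> ha hb hqa hd.
have a0 : a != 0 by rewrite gt_eqF.
have b0 : b != 0 by rewrite gt_eqF.
split.
  have : (2 * (p * d1 / a ^+ 2 - q * d2 / b ^+ 2)) ^+ 2 -
    4 * (d1 ^+ 2 / a ^+ 2 - d2 ^+ 2 / b ^+ 2) * (p ^+ 2 / a ^+ 2 - q ^+ 2 / b ^+ 2 - 1) =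
    4 * ((- d2 * p + d1 * q) ^+ 2 - (a ^+ 2 * d2 ^+ 2 - b ^+ 2 * d1 ^+ 2)) / (a ^+ 2 * b ^+ 2).
    by field; rewrite b0 a0.
  rewrite hd subrr => /esym /eqP; rewrite !mulf_eq0 invr_eq0 !mulf_eq0.
  rewrite (negbTE a0) (negbTE b0) pnatr_eq0 /= !orbF subr_eq0 => /eqP //.
apply/negP => /eqP h.
move/eqP: h; rewrite paddr_eq0 ?sqr_ge0 // !sqrf_eq0 => /andP [/eqP e1 /eqP e2].
by move: hqa; rewrite e1 e2 expr0n /= !mul0r subrr eqxx.
Qed.

Definition xc (R : rcfType) (O u P : pt R) := dot (psub P O) u.
Definition yc (R : rcfType) (O u P : pt R) := dot (psub P O) (perp u).

Lemma dot_psub (R : rcfType) (O u P Q : pt R) :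
  dot (psub Q P) u = dot (psub Q O) u - dot (psub P O) u.
Proof. by case: O u P Q => [o1 o2] [u1 u2] [p1 p2] [q1 q2]; rewrite /dot /psub /=; ring. Qed.

Lemma dist_coord (R : rcfType) (O u P Q : pt R) : dot u u = 1 ->
  dist2 P Q = (xc O u P - xc O u Q) ^+ 2 + (yc O u P - yc O u Q) ^+ 2.
Proof.
case: O u P Q => [o1 o2] [u1 u2] [p1 p2] [q1 q2]; rewrite /xc /yc /dist2 /dot /psub /perp /= => uu.
transitivity (((p1 - q1) * (p1 - q1) + (p2 - q2) * (p2 - q2)) * (u1 * u1 + u2 * u2)).
  by rewrite uu mulr1.
ring.
Qed.

Lemma cross_coord (R : rcfType) (O u A B C : pt R) : dot u u = 1 ->
  cross (psub B A) (psub C A) =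
  (xc O u B - xc O u A) * (yc O u C - yc O u A) - (yc O u B - yc O u A) * (xc O u C - xc O u A).
Proof.
case: O u A B C => [o1 o2] [u1 u2] [p1 p2] [q1 q2] [r1 r2]; rewrite /xc /yc /cross /dot /psub /perp /= => uu.
transitivity (((q1 - p1) * (r2 - p2) - (q2 - p2) * (r1 - p1)) * (u1 * u1 + u2 * u2)).
  by rewrite uu mulr1.
ring.
Qed.

Lemma focus1_coord (R : rcfType) (O u : pt R) a b : dot u u = 1 ->
  xc O u (focus1 O u a b) = hyp_c a b /\ yc O u (focus1 O u a b) = 0.
Proof.
rewrite /focus1 /xc /yc; set c := hyp_c a b.
case: O u => [o1 o2] [u1 u2]; rewrite /dot /psub /padd /pscale /perp /= => uu.
split; last by ring.
by transitivity (c * (u1 * u1 + u2 * u2)); [ring | rewrite uu mulr1].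
Qed.

Lemma focus2_coord (R : rcfType) (O u : pt R) a b : dot u u = 1 ->
  xc O u (focus2 O u a b) = - hyp_c a b /\ yc O u (focus2 O u a b) = 0.
Proof.
rewrite /focus2 /xc /yc; set c := hyp_c a b.
case: O u => [o1 o2] [u1 u2]; rewrite /dot /psub /padd /pscale /perp /= => uu.
split; last by ring.
by transitivity (- c * (u1 * u1 + u2 * u2)); [ring | rewrite uu mulr1].
Qed.

Lemma tangent_coord (R : rcfType) (O u : pt R) a b P Q : 0 < a -> 0 < b ->
  tangent_line O u a b P Q ->
  let p := xc O u P in let q := yc O u P in
  let p' := xc O u Q in let q' := yc O u Q in
  (- (q' - q) * p + (p' - p) * q) ^+ 2 = a ^+ 2 * (q' - q) ^+ 2 - b ^+ 2 * (p' - p) ^+ 2 /\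
  (p' - p) ^+ 2 + (q' - q) ^+ 2 != 0.
Proof.
move=> ha hb; rewrite /tangent_line /= => -[h1 h2].
have := tl_alg ha hb h1 h2.
by rewrite /xc /yc !(dot_psub O u P Q) !(dot_psub O (perp u) P Q).
Qed.

Theorem corollary2p5 (R : rcfType) (O u : pt R) (a b : R) (A B C : pt R) :
  0 < a -> 0 < b -> dot u u = 1 ->
  nondeg_triangle A B C ->
  tangent_line O u a b A B ->
  tangent_line O u a b B C ->
  tangent_line O u a b C A ->
  (is_circumcenter (focus1 O u a b) A B C \/ is_circumcenter (focus2 O u a b) A B C) ->
  1 < eccentricity a b < 3.
Proof.
move=> ha hb uu hnd tAB tBC tCA hcc.
have hc2 : hyp_c a b ^+ 2 = a ^+ 2 + b ^+ 2.
  by rewrite /hyp_c sqr_sqrtr // addr_ge0 ?sqr_ge0.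
have hc0 : 0 <= hyp_c a b by rewrite /hyp_c sqrtr_ge0.
have [f [hf [F [hxF hyF hcF]]]] : exists f, f ^+ 2 = a ^+ 2 + b ^+ 2 /\
    exists F, [/\ xc O u F = f, yc O u F = 0 & is_circumcenter F A B C].
  case: hcc => h.
    have [h1 h2] := focus1_coord O a b uu.
    by exists (hyp_c a b); split => //; exists (focus1 O u a b).
  have [h1 h2] := focus2_coord O a b uu.
  by exists (- hyp_c a b); rewrite sqrrN; split => //; exists (focus2 O u a b).
move: hcF; rewrite /is_circumcenter !(dist_coord O _ _ uu) hxF hyF => -[e1 e2].
move: hnd; rewrite /nondeg_triangle (cross_coord O _ _ _ uu) => hnd.
have [t1 d1] := tangent_coord ha hb tAB.
have [t2 d2] := tangent_coord ha hb tBC.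
have [t3 d3] := tangent_coord ha hb tCA.
have E : forall x y : R, (f - x) ^+ 2 + (0 - y) ^+ 2 = (x - f) ^+ 2 + y ^+ 2.
  by move=> x y; ring.
rewrite !E in e1 e2.
have m12 := pedal hf e1 t1 d1.
have m23 := pedal hf e2 t2 d2.
have m31 := pedal hf (etrans (esym e2) (esym e1)) t3 d3.
have key := core hnd m12 m23 m31 e1 e2.
rewrite hf in key.
rewrite /eccentricity ltr_pdivlMr // ltr_pdivrMr // mul1r.
apply/andP; split; nra.
Qed.
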